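(* Let $Q$ be a countable set, $(F_i)_{i\in I}$ a family of real-valued maps on $Q$ and $(k_i)_{i\in I}$ a bounded family of nonnegative real numbers such that $\sum_{t\in S}|F_i(t)|\le k_i\mod c_0(I)$ for every finite subset $S$ of $Q$. Then $(F_i)_{i\in I}$ is of type $c_0\ell_1$ bounded by $(k_i)_{i\in I}$.
   Context: $c_0(I)$ is the set of real families $(a_i)_{i\in I}$ with $\{i:|a_i|\ge\varepsilon\}$ finite for all $\varepsilon>0$ (written $\lim_{i\in I}a_i=0$). ''$x_i\le y_i\mod c_0(I)$'' means there is $(z_i)\in c_0(I)$ with $x_i\le y_i+z_i$ for all $i$, i.e. $\{i:x_i\ge y_i+\varepsilon\}$ is finite for every $\varepsilon>0$. $(F_i)_{i\in I}$ is of type $c_0\ell_1$ bounded by $(k_i)$ if $F_i(t)=a_{i,t}+b_{i,t}$ for $i\in I$, $t\in Q$, with $\lim_{i\in I}a_{i,t}=0$ for each $t\in Q$ and $\sum_{t\in Q}|b_{i,t}|\le k_i$ for each $i\in I$. *)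

(* Defs.v *)
From HB Require Import structures.
From mathcomp Require Import all_boot all_order all_algebra.
From mathcomp Require Import all_classical all_reals all_analysis.
Set Implicit Arguments. Unset Strict Implicit. Unset Printing Implicit Defensive.
Import Order.TTheory GRing.Theory Num.Theory.
Local Open Scope classical_set_scope.
Local Open Scope ring_scope.

Definition le_mod_c0 (R : realType) (I : Type) (x y : I -> R) : Prop :=
  forall eps : R, 0 < eps -> finite_set [set i | y i + eps <= x i].

Definition c0_lim (R : realType) (I : Type) (a : I -> R) : Prop :=
  forall eps : R, 0 < eps -> finite_set [set i | eps <= `|a i|].

Definition type_c0l1 (R : realType) (I : Type) (Q : choiceType)
    (F : I -> Q -> R) (k : I -> R) : Prop :=
  exists (a b : I -> Q -> R),
    (forall i t, F i t = a i t + b i t) /\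
    (forall t, c0_lim (fun i => a i t)) /\
    (forall i, (\esum_(t in [set: Q]) (`|b i t|)%:E <= (k i)%:E)%E).

(* Main.v *)
Require Import Defs.
From HB Require Import structures.
From mathcomp Require Import all_boot all_order all_algebra.
From mathcomp Require Import all_classical all_reals all_analysis.
From mathcomp Require finmap.
From mathcomp Require Import ring.
Import Order.TTheory GRing.Theory Num.Theory.
Local Open Scope classical_set_scope.
Local Open Scope ring_scope.

Lemma fsum_mono (R : realType) (T : choiceType) (A B : set T) (f : T -> R) :
  finite_set A -> finite_set B -> A `<=` B -> (forall t, 0 <= f t) ->
  \sum_(t \in A) f t <= \sum_(t \in B) f t.
Proof.
move=> fA fB AB f0.
rewrite -lee_fin -!fsumEFin //.
apply: lee_fsum_nneg_subset => //; first by apply/subsetP.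
by move=> t _; rewrite lee_fin.
Qed.

Lemma fsum_term (R : realType) (T : choiceType) (A : set T) (f : T -> R) x :
  finite_set A -> A x -> (forall t, 0 <= f t) ->
  f x <= \sum_(t \in A) f t.
Proof.
move=> fA Ax f0; rewrite (fsbigD1 x) //= lerDl.
by apply: fsumr_ge0 => t _.
Qed.

Theorem proposition2p11 (R : realType) (I : Type) (Q : countType)
    (F : I -> Q -> R) (k : I -> R) :
  (forall i, 0 <= k i) ->
  (exists M : R, forall i, k i <= M) ->
  (forall S : set Q, finite_set S ->
     le_mod_c0 (fun i => \sum_(t \in S) `|F i t|) k) ->
  type_c0l1 F k.
Proof.
move=> hk _ hyp.
pose S n := [set t : Q | (pickle t < n)%N].
pose sF i n := \sum_(t \in S n) `|F i t|.
pose d (n : nat) : R := n.+1%:R^-1.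
pose E n := [set i | k i + d n <= sF i n].
have d0 n : 0 < d n by rewrite /d invr_gt0 ltr0Sn.
have Sfin n : finite_set (S n).
  apply: (finite_preimage (B := `I_n) (f := pickle)); last exact: finite_II.
  by move=> x y _ _; exact: (pcan_inj pickleK).
have Smono n n' : (n <= n')%N -> S n `<=` S n'.
  by move=> nn' t /= lt; apply: leq_trans lt nn'.
have hE n : finite_set (E n) by apply: hyp (Sfin n) (d n) (d0 n).
have dmono n n' : (n <= n')%N -> d n' <= d n.
  move=> nn'; rewrite /d lef_pV2 ?posrE ?ltr0Sn // ler_nat ltnS //.
have Xbound (X : set Q) : finite_set X -> exists n, X `<=` S n.
  move=> /finite_fsetP [B ->]; exists (\max_(t <- finmap.enum_fset B) (pickle t).+1)%N.
  by move=> t /= tB; apply: (leq_bigmax_seq (F := fun t => (pickle t).+1)).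
have : forall i, exists o : option nat, match o with
    | None => forall n, ~ E n i
    | Some n => E n i /\ forall j, (j < n)%N -> ~ E j i end.
  move=> i; case: (pselect (exists n, E n i)) => [ex|nex].
    have ex' : exists n, `[< E n i >] by case: ex => n hn; exists n; apply/asboolP.
    exists (Some (ex_minn ex')); case: ex_minnP => n /asboolP Hn Hmin; split => //.
    by move=> j jn /asboolP /Hmin; rewrite leqNgt jn.
  by exists None => n Hn; apply: nex; exists n.
move=> /choice [m hm].
pose c i N := k i / (k i + d N).
pose b i t := match m i with None => F i t | Some 0%N => 0
  | Some N.+1 => if (pickle t < N)%N then c i N * F i t else 0 end.
exists (fun i t => F i t - b i t), b.
split; first by move=> i t; rewrite subrK.
split.
  move=> t eps eps0.
  have [k0 hk0] := ltr_add_invr eps0; rewrite add0r in hk0.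
  pose M := maxn k0 (pickle t).+1.
  have dM : d M < eps by apply: le_lt_trans hk0; apply: dmono; apply: leq_maxl.
  apply: (sub_finite_set (B := \bigcup_(n in `I_M.+1) E n)); last first.
    by apply: bigcup_finite; [exact: finite_II | move=> n _; exact: hE].
  move=> i /= Hi; move: Hi (hm i); rewrite /b; case: (m i) => [[|N]|].
  - by move=> _ [E0 _]; exists 0%N.
  - move=> Hi [EN hmin]; case: (ltnP N.+1 M.+1) => [lt|ge].
      by exists N.+1.
    exfalso.
    have ptN : (pickle t < N)%N.
      by apply: leq_trans (leq_maxr k0 (pickle t).+1) _; rewrite -ltnS.
    rewrite ptN in Hi.
    have notE := hmin N (ltnSn N).
    have lt : sF i N < k i + d N by rewrite ltNge; apply/negP.
    have hkd : 0 < k i + d N by apply: ltr_wpDl (hk i) (d0 N).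
    have Ft : `|F i t| <= sF i N.
      by rewrite /sF; apply: (@fsum_term _ _ (S N) (fun t => `|F i t|) t) => // x; exact: normr_ge0.
    have eq : F i t - c i N * F i t = F i t * (d N / (k i + d N)).
      rewrite /c; field; by rewrite gt_eqF.
    move: Hi; rewrite eq normrM (ger0_norm (x := d N / _)); last first.
      by rewrite divr_ge0 // ltW.
    apply/negP; rewrite -ltNge.
    apply: lt_trans dM; apply: (@lt_le_trans _ _ (d N)); last by apply: dmono; rewrite -ltnS.
    rewrite mulrA ltr_pdivrMr // mulrC ltr_pM2l //.
    by apply: le_lt_trans Ft lt.
  - by move=> Hi _; move: Hi; rewrite subrr normr0 leNgt eps0.
move=> i; apply: ge_ereal_sup => _ [X [finX _] <-].
rewrite fsumEFin // lee_fin.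
move: (hm i); rewrite /b; case: (m i) => [[|N]|].
- move=> _; rewrite fsbig1 ?hk // => t _; exact: normr0.
- move=> [EN hmin].
  have notE := hmin N (ltnSn N).
  have lt : sF i N < k i + d N by rewrite ltNge; apply/negP.
  have hkd : 0 < k i + d N by apply: ltr_wpDl (hk i) (d0 N).
  pose g := fun t => `|(if (pickle t < N)%N then c i N * F i t else 0)|.
  change (\sum_(t \in X) g t <= k i).
  apply: (@le_trans _ _ (\sum_(t \in X `|` S N) g t)).
    have fU : finite_set (X `|` S N) by rewrite finite_setU; split.
    apply: (@fsum_mono _ _ _ _ _ finX fU) => [t Xt|t]; [by left | exact: normr_ge0].
  rewrite -(fsbig_widen (S N)) //; last first.
    by move=> t [_ /= ntN]; rewrite /g ifF ?normr0 //; apply/negP.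
  rewrite (eq_fsbigr (fun t => c i N * `|F i t|)); last first.
    move=> t /set_mem /= tN; rewrite /g tN normrM ger0_norm //.
    by rewrite /c divr_ge0 // ltW.
  rewrite -mulr_fsumr /c -/(sF i N) mulrAC ler_pdivrMr //.
  by apply: ler_wpM2l => //; apply: ltW.
- move=> hn; rewrite leNgt; apply/negP => lt.
  have [j hj] := ltr_add_invr lt.
  have [n0 Xn0] := Xbound X finX.
  pose n := maxn j n0.
  have h1 : \sum_(t \in X) `|F i t| <= sF i n.
    rewrite /sF; apply: (@fsum_mono _ _ X (S n) (fun t => `|F i t|) finX (Sfin n)).
      exact: (subset_trans Xn0 (Smono n0 n (leq_maxr j n0))).
    by move=> t; exact: normr_ge0.
  have h3 : sF i n < k i + d n by rewrite ltNge; apply/negP; apply: hn.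
  have h2 : k i + d n <= k i + d j by rewrite lerD2l; apply: dmono; exact: leq_maxl.
  by have := lt_le_trans (lt_trans (lt_le_trans hj h1) h3) h2; rewrite ltxx.
Qed.
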